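(* Sacks forcing $\mathbb{S}$ is weighted: for every $T\in\mathbb{S}$ there is a weight $\rho$ on $T$ such that every tree $S$ with $S\le_\rho T$ belongs to $\mathbb{S}$.
   Context: Sacks forcing $\mathbb{S}$ is the set of all perfect subtrees of $2^{<\omega}$ (trees in which every node has two incomparable extensions) ordered by inclusion. For a tree $T$ and $s\in T$, $T_s=\{t\in T:t\subseteq s\text{ or }s\subseteq t\}$. A weight on a perfect tree $T$ is a map $\rho:T\times T\to[T]^{<\omega}$ with $\rho(s,t)\subseteq T_s\setminus T_t$ for all $s,t\in T$. For a tree $S$, $S\le_\rho T$ means $S\subseteq T$ and the set of $s_0\in S$ for which there is an injective sequence $(s_n)_{n\in\omega}$ in $S_{s_0}$ (starting at $s_0$) with $\rho(s_n,s_{n+1})\subseteq S$ for all $n$ is dense in $S$. *)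

(* Defs.v *)
From mathcomp Require Import all_boot.
Set Implicit Arguments. Unset Strict Implicit. Unset Printing Implicit Defensive.

(* Nodes of 2^{<omega} are finite binary sequences [seq bool];
   [prefix s t] (from seq.v) means s is an initial segment of t, i.e. s ⊆ t
   as functions. *)

Definition node := seq bool.
Definition bset := node -> Prop.

Definition is_tree (T : bset) : Prop :=
  (exists s, T s) /\ (forall s t, prefix s t -> T t -> T s).

Definition incomparable (s t : node) : Prop :=
  ~~ prefix s t /\ ~~ prefix t s.

Definition perfect (T : bset) : Prop :=
  is_tree T /\
  forall s, T s -> exists t u, [/\ T t, T u, prefix s t, prefix s u & incomparable t u].

Definition Sacks (T : bset) : Prop := perfect T.

Definition cone (T : bset) (s : node) : bset :=
  fun t => T t /\ (prefix t s || prefix s t).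

(* A weight on T: rho(s,t) is a finite subset of T_s \ T_t for s,t in T.
   Finite subsets are represented by finite lists. *)
Definition weight (T : bset) (rho : node -> node -> seq node) : Prop :=
  forall s t, T s -> T t ->
    forall x, x \in rho s t -> cone T s x /\ ~ cone T t x.

Definition rho_good (rho : node -> node -> seq node) (S : bset) (s0 : node) : Prop :=
  S s0 /\
  exists f : nat -> node,
    [/\ injective f, f 0 = s0, (forall n, cone S s0 (f n))
      & forall n x, x \in rho (f n) (f n.+1) -> S x].

Definition dense_in (S D : bset) : Prop :=
  forall s, S s -> exists t, prefix s t /\ D t.

Definition le_rho (rho : node -> node -> seq node) (S T : bset) : Prop :=
  (forall s, S s -> T s) /\ dense_in S (rho_good rho S).

(* Main.v *)
Require Import Defs.
From mathcomp Require Import all_boot.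
From Stdlib Require Import Classical ClassicalEpsilon.
Set Implicit Arguments. Unset Strict Implicit.

Lemma prefix_comp (a e c : node) : prefix a c -> prefix e c -> prefix a e || prefix e a.
Proof.
elim: c a e => [|y c IH] [|x a] [|z e] //=.
case/andP=> /eqP -> h1 /andP [/eqP -> h2]; rewrite !eqxx /=; exact: IH.
Qed.

Lemma prefix_rcons_case (a d : node) j : prefix a (rcons d j) -> prefix a d \/ a = rcons d j.
Proof.
elim: d a => [|y d IH] [|x a] //=; try by left.
- by case: a => [|? ?]; rewrite ?andbF ?andbT // => /eqP ->; right.
- case/andP=> /eqP -> /IH [h|->]; [left; rewrite eqxx | right] => //.
Qed.

Lemma rcons_excl (d y : node) i : prefix (rcons d i) y -> prefix (rcons d (~~ i)) y -> False.
Proof.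
elim: d y => [|x d IH] [|z y] //=.
- by case/andP=> /eqP -> _ /andP [/eqP]; case: z.
- by case/andP=> /eqP -> h1 /andP [_ h2]; exact: IH h1 h2.
Qed.

Lemma incomp_of (d b y : node) i : prefix (rcons d i) b -> prefix (rcons d (~~ i)) y -> incomparable b y.
Proof.
move=> h1 h2; split; apply/negP => h.
- by apply: (rcons_excl _ h2); apply: prefix_trans h.
- by apply: (rcons_excl h1); apply: prefix_trans h.
Qed.

Lemma lcp_base (b c : node) : ~~ prefix b c ->
  exists d i, [/\ prefix (rcons d i) b & d = c \/ prefix (rcons d (~~ i)) c].
Proof.
elim: b c => [|x b IH] [|y c] //= h.
- by exists [::], x; split; [rewrite /= eqxx prefix0s | left].
- have [e|ne] := eqVneq x y; [subst y|].
  + rewrite ?eqxx /= in h; have [d [i [h1 h2]]] := IH _ h.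
    exists (x :: d), i; split; first by rewrite /= ?eqxx ?prefix0s.
    by case: h2 => [->|h2]; [left|right; rewrite /= eqxx].
  + exists [::], x; split; first by rewrite /= ?eqxx ?prefix0s.
    right; clear h IH; move: ne; rewrite /=; case: x; case: y => //= _; rewrite prefix0s ?andbT. all: done.
Qed.

Lemma lcp (s0 b c : node) : prefix s0 b -> prefix s0 c -> ~~ prefix b c ->
  exists d i, [/\ prefix s0 d, prefix (rcons d i) b & d = c \/ prefix (rcons d (~~ i)) c].
Proof.
elim: s0 b c => [|x s0 IH] b c.
- move=> _ _ /lcp_base [d [i [h1 h2]]]; exists d, i; split => //; exact: prefix0s.
- case: b => [|y b] //; case: c => [|z c] //= /andP [/eqP <- h1] /andP [/eqP <- h2].
  rewrite ?eqxx /= => h; have [d [i [h3 h4 h5]]] := IH _ _ h1 h2 h.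
  exists (x :: d), i; split; rewrite /= ?eqxx //.
  by case: h5 => [->|h5]; [left|right; rewrite /= ?eqxx].
Qed.

Lemma rcons_take (d b : node) i : prefix (rcons d i) b ->
  rcons (take (size d) b) (~~ nth false b (size d)) = rcons d (~~ i) /\ size d < size b.
Proof.
elim: d b => [|x d IH] [|y b] //=.
- by case/andP=> /eqP -> _.
- by case/andP=> /eqP -> /IH [-> h]; rewrite ltnS.
Qed.

Lemma escape (f : nat -> node) (c : node) : injective f -> exists n, ~~ prefix (f n) c.
Proof.
move=> inj; case: (classic (exists n, ~~ prefix (f n) c)) => // hn; exfalso.
have hall n : prefix (f n) c.
  by case E: (prefix (f n) c) => //; exfalso; apply: hn; exists n; rewrite E.
pose L := [seq take k c | k <- iota 0 (size c).+1].
have sub : {subset map f (iota 0 (size L).+1) <= L}.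
  move=> y /mapP [n _ ->]; apply/mapP; exists (size (f n)).
    by rewrite mem_iota add0n ltnS /= size_prefix.
  by move: (hall n); rewrite prefixE => /eqP.
have := uniq_leq_size _ sub.
by rewrite map_inj_uniq // iota_uniq size_map size_iota ltnn => /(_ isT).
Qed.

Definition dec (P : Prop) : bool := if excluded_middle_informative P then true else false.
Lemma decP (P : Prop) : dec P -> P.
Proof. by rewrite /dec; case: excluded_middle_informative. Qed.
Lemma Pdec (P : Prop) : P -> dec P.
Proof. by rewrite /dec; case: excluded_middle_informative. Qed.

Definition rhoT (T : bset) (a b : node) : seq node :=
  [seq x <- [seq rcons (take k b) (~~ nth false b k) | k <- iota 0 (size b)]
     | dec (cone T a x /\ ~ cone T b x)].

Theorem lemma4p12 :
  forall T : bset, Sacks T ->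
    exists rho : node -> node -> seq node,
      weight T rho /\
      forall S : bset, is_tree S -> le_rho rho S T -> Sacks S.
Proof.
move=> T [[_ Tcl] Tperf]; exists (rhoT T); split.
  by move=> s t _ _ x; rewrite mem_filter => /andP [/decP h _].
move=> S Stree [StT Sdense]; split => // s Ss.
have [s0 [ss0 [Ss0 [f [inj f0 fcone frho]]]]] := Sdense s Ss.
have Ts0 := StT _ Ss0.
have [t [u [Tt Tu s0t s0u [tu ut]]]] := Tperf s0 Ts0.
have [c [i0 [s0c hc1 hc2]]] := lcp s0t s0u tu.
have hc2' : prefix (rcons c (~~ i0)) u.
  case: hc2 => // cu; exfalso; move/negP: ut; apply; rewrite -cu.
  exact: prefix_trans (prefix_rcons _ _) hc1.
have Tsplit j : T (rcons c j).
  clear hc2; case: j; case: i0 hc1 hc2' => h1 h2 /=; solve [exact: Tcl _ _ h1 Tt | exact: Tcl _ _ h2 Tu].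
have Tc : T c := Tcl _ _ (prefix_rcons c true) (Tsplit true).
have [m0 hm0] := escape c inj.
case: (ex_minnP (ex_intro (fun n => ~~ prefix (f n) c) m0 hm0)) => m hm minm.
case: m hm minm => [|m'] hm minm.
  by rewrite f0 s0c in hm.
have am : prefix (f m') c.
  case E: (prefix (f m') c) => //; have := minm m'; rewrite E => /(_ isT).
  by rewrite ltnn.
have [Sa _] := fcone m'.
have [Sb cb] := fcone m'.+1.
have s0b : prefix s0 (f m'.+1).
  case/orP: cb => // bs0; exfalso.
  by rewrite (prefix_trans bs0 s0c) in hm.
have [d [i [s0d db hdc]]] := lcp s0b s0c hm.
have Tx : T (rcons d (~~ i)).
  case: hdc => [dc|xc]; first by rewrite dc.
  exact: Tcl _ _ xc Tc.
have [bx xb] := incomp_of db (prefix_refl (rcons d (~~ i))).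
suff [y [Sy xy]] : exists y, S y /\ prefix (rcons d (~~ i)) y.
  have [h1 h2] := incomp_of db xy.
  exists y, (f m'.+1); split => //.
  - apply: prefix_trans ss0 _; apply: prefix_trans s0d _.
    exact: prefix_trans (prefix_rcons _ _) xy.
  - exact: prefix_trans ss0 s0b.
have xrho : prefix (f m') d -> S (rcons d (~~ i)).
  move=> ad; apply: (frho m'); rewrite mem_filter; apply/andP; split.
    apply: Pdec; split.
      split => //; apply/orP; right; exact: prefix_trans ad (prefix_rcons d _).
    by move=> [_ /orP [h|h]]; [move: h; apply/negP | move: h; apply/negP].
  have [e lt] := rcons_take db.
  by apply/mapP; exists (size d); rewrite ?mem_iota ?add0n // e.
case: hdc => [dc|xc].
  by exists (rcons d (~~ i)); split; [apply: xrho; rewrite dc | exact: prefix_refl].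
case/orP: (prefix_comp am xc) => [ax|xa].
  case: (prefix_rcons_case ax) => [ad|ax'].
    by exists (rcons d (~~ i)); split; [exact: xrho ad | exact: prefix_refl].
  by exists (f m'); split => //; rewrite ax' prefix_refl.
by exists (f m'); split.
Qed.
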